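(* For every bad normalized fully ternary string $s\neq 0212$ of length $n$ ending in $2$, $d_{\rm s}(s)=n-2$.
   Context: Strings are finite words over $\{0,1,2,\dots\}$. A string is \emph{normalized} if no two adjacent symbols are equal; the \emph{normalization} of a string replaces every maximal run of identical symbols by a single copy. A string is \emph{fully $k$-ary} if the set of symbols occurring in it is exactly $\{0,\dots,k-1\}$; fully ternary means fully $3$-ary. For a normalized string $s=s_1\cdots s_n$ and $1\le i\le n$, the flip $f^{(i)}(s)$ is the normalization of $s_i\cdots s_1 s_{i+1}\cdots s_n$. The sorting distance $d_{\rm s}(s)$ of a normalized fully ternary string is the minimum number of flips needed to transform $s$ into $012$. Regular-expression notation: $w^i$ is $i$ repetitions of $w$, $w^*$ is zero or more, $w^+$ one or more, $w^{\ge 2}$ two or more repetitions; $\{a,b\}$ denotes a single symbol that is either $a$ or $b$ (chosen independently at each occurrence). A normalized fully ternary string ending in $2$ is \emph{bad} (for sorting; no relabelling allowed) if it is of one of the following types: (I) $0(12)^{\ge 2}$; (II) $(\{0,1\}2)^+$ or $2(\{0,1\}2)^+$; (III) $(\{1,2\}0)^+2$ or $0(\{1,2\}0)^+2$; (IV) $(\{1,2\}0)^+12$ or $(0\{1,2\})^+012$, in either case containing at least two occurrences of $2$; (V) $(01)^*0212$ or $(10)^+212$; (VI) $1(20)^+1(20)^*2$ or $0(21)^+0(21)^*2$; (VII) $1(02)^+1(02)^+$; (VIII) $1(02)^+12$; (IX) one of the following 77 strings: 210212, 021012, 212012, 120102, 201202, 0210202, 1021202, 0212012, 2120102, 0102102,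 1212012, 2010212, 0120212, 1201012, 1201212, 2012012, 10210212, 21021212, 02102012, 02101212, 10212012, 02121012, 02120102, 10102102, 02010212, 21202012, 21201012, 21201202, 20210212, 01021202, 01020212, 20212012, 12120102, 12010212, 12010202, 20120102, 12012012, 021021202, 102120102, 102010212, 021202012, 021201012, 020210212, 101020212, 020212012, 212010202, 212012012, 010210212, 010210202, 010212012, 202010212, 121202012, 121201202, 201021202, 120212012, 012021212, 120102012, 201202012, 120120212, 201201012, 0210212012, 1021202012, 1021201012, 1020210212, 1010210202, 0202010212, 2120202012, 2120102012, 2021021212, 2010212012, 1201021202, 1201202012, 10202010212, 02120102012, 02021021212, 21201202012, 12120202012. All other normalized fully ternary strings ending in $2$ are \emph{good}. *)

(* Defs.v *)
From mathcomp Require Import all_boot.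
Set Implicit Arguments. Unset Strict Implicit. Unset Printing Implicit Defensive.

Fixpoint normalize (s : seq nat) : seq nat :=
  match s with
  | [::] => [::]
  | x :: s' =>
      match normalize s' with
      | [::] => [:: x]
      | y :: t => if x == y then y :: t else x :: y :: t
      end
  end.

Definition normalized (s : seq nat) : Prop := sorted (fun a b => a != b) s.

Definition fully_kary (k : nat) (s : seq nat) : Prop :=
  forall x : nat, (x \in s) = (x < k).

Definition fully_ternary (s : seq nat) : Prop := fully_kary 3 s.

Definition flip (i : nat) (s : seq nat) : seq nat :=
  normalize (rev (take i s) ++ drop i s).

Fixpoint apply_flips (idx : seq nat) (s : seq nat) : option (seq nat) :=
  match idx with
  | [::] => Some s
  | i :: idx' => if (1 <= i) && (i <= size s) then apply_flips idx' (flip i s)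
                else None
  end.

Definition sorts_in (k : nat) (s : seq nat) : Prop :=
  exists idx : seq nat, size idx = k /\ apply_flips idx s = Some [:: 0; 1; 2].

Definition sorting_distance_is (s : seq nat) (d : nat) : Prop :=
  sorts_in d s /\ forall k, sorts_in k s -> d <= k.

Inductive re : Type :=
  | REps
  | RSym of seq nat
  | RCat of re & re
  | RStar of re.

Inductive matches : re -> seq nat -> Prop :=
  | M_eps : matches REps [::]
  | M_sym (A : seq nat) (a : nat) : a \in A -> matches (RSym A) [:: a]
  | M_cat (r1 r2 : re) (u v : seq nat) :
      matches r1 u -> matches r2 v -> matches (RCat r1 r2) (u ++ v)
  | M_star0 (r : re) : matches (RStar r) [::]
  | M_starS (r : re) (u v : seq nat) :
      matches r u -> matches (RStar r) v -> matches (RStar r) (u ++ v).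

Fixpoint RWord (w : seq nat) : re :=
  match w with
  | [::] => REps
  | a :: w' => RCat (RSym [:: a]) (RWord w')
  end.

Definition RPlus (r : re) : re := RCat r (RStar r).
Definition RGe2 (r : re) : re := RCat r (RCat r (RStar r)).

Notation "r1 ';;' r2" := (RCat r1 r2) (at level 40, left associativity).

Definition typeI (s : seq nat) : Prop :=
  matches (RWord [:: 0] ;; RGe2 (RWord [:: 1; 2])) s.

Definition typeII (s : seq nat) : Prop :=
  matches (RPlus (RSym [:: 0; 1] ;; RWord [:: 2])) s \/
  matches (RWord [:: 2] ;; RPlus (RSym [:: 0; 1] ;; RWord [:: 2])) s.

Definition typeIII (s : seq nat) : Prop :=
  matches (RPlus (RSym [:: 1; 2] ;; RWord [:: 0]) ;; RWord [:: 2]) s \/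
  matches (RWord [:: 0] ;; RPlus (RSym [:: 1; 2] ;; RWord [:: 0]) ;; RWord [:: 2]) s.

Definition typeIV (s : seq nat) : Prop :=
  (matches (RPlus (RSym [:: 1; 2] ;; RWord [:: 0]) ;; RWord [:: 1; 2]) s \/
   matches (RPlus (RWord [:: 0] ;; RSym [:: 1; 2]) ;; RWord [:: 0; 1; 2]) s) /\
  2 <= count_mem 2 s.

Definition typeV (s : seq nat) : Prop :=
  matches (RStar (RWord [:: 0; 1]) ;; RWord [:: 0; 2; 1; 2]) s \/
  matches (RPlus (RWord [:: 1; 0]) ;; RWord [:: 2; 1; 2]) s.

Definition typeVI (s : seq nat) : Prop :=
  matches (RWord [:: 1] ;; RPlus (RWord [:: 2; 0]) ;; RWord [:: 1]
           ;; RStar (RWord [:: 2; 0]) ;; RWord [:: 2]) s \/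
  matches (RWord [:: 0] ;; RPlus (RWord [:: 2; 1]) ;; RWord [:: 0]
           ;; RStar (RWord [:: 2; 1]) ;; RWord [:: 2]) s.

Definition typeVII (s : seq nat) : Prop :=
  matches (RWord [:: 1] ;; RPlus (RWord [:: 0; 2]) ;; RWord [:: 1]
           ;; RPlus (RWord [:: 0; 2])) s.

Definition typeVIII (s : seq nat) : Prop :=
  matches (RWord [:: 1] ;; RPlus (RWord [:: 0; 2]) ;; RWord [:: 1; 2]) s.

Definition type9_strings : seq (seq nat) := [::
  [:: 2; 1; 0; 2; 1; 2];
  [:: 0; 2; 1; 0; 1; 2];
  [:: 2; 1; 2; 0; 1; 2];
  [:: 1; 2; 0; 1; 0; 2];
  [:: 2; 0; 1; 2; 0; 2];
  [:: 0; 2; 1; 0; 2; 0; 2];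
  [:: 1; 0; 2; 1; 2; 0; 2];
  [:: 0; 2; 1; 2; 0; 1; 2];
  [:: 2; 1; 2; 0; 1; 0; 2];
  [:: 0; 1; 0; 2; 1; 0; 2];
  [:: 1; 2; 1; 2; 0; 1; 2];
  [:: 2; 0; 1; 0; 2; 1; 2];
  [:: 0; 1; 2; 0; 2; 1; 2];
  [:: 1; 2; 0; 1; 0; 1; 2];
  [:: 1; 2; 0; 1; 2; 1; 2];
  [:: 2; 0; 1; 2; 0; 1; 2];
  [:: 1; 0; 2; 1; 0; 2; 1; 2];
  [:: 2; 1; 0; 2; 1; 2; 1; 2];
  [:: 0; 2; 1; 0; 2; 0; 1; 2];
  [:: 0; 2; 1; 0; 1; 2; 1; 2];
  [:: 1; 0; 2; 1; 2; 0; 1; 2];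
  [:: 0; 2; 1; 2; 1; 0; 1; 2];
  [:: 0; 2; 1; 2; 0; 1; 0; 2];
  [:: 1; 0; 1; 0; 2; 1; 0; 2];
  [:: 0; 2; 0; 1; 0; 2; 1; 2];
  [:: 2; 1; 2; 0; 2; 0; 1; 2];
  [:: 2; 1; 2; 0; 1; 0; 1; 2];
  [:: 2; 1; 2; 0; 1; 2; 0; 2];
  [:: 2; 0; 2; 1; 0; 2; 1; 2];
  [:: 0; 1; 0; 2; 1; 2; 0; 2];
  [:: 0; 1; 0; 2; 0; 2; 1; 2];
  [:: 2; 0; 2; 1; 2; 0; 1; 2];
  [:: 1; 2; 1; 2; 0; 1; 0; 2];
  [:: 1; 2; 0; 1; 0; 2; 1; 2];
  [:: 1; 2; 0; 1; 0; 2; 0; 2];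
  [:: 2; 0; 1; 2; 0; 1; 0; 2];
  [:: 1; 2; 0; 1; 2; 0; 1; 2];
  [:: 0; 2; 1; 0; 2; 1; 2; 0; 2];
  [:: 1; 0; 2; 1; 2; 0; 1; 0; 2];
  [:: 1; 0; 2; 0; 1; 0; 2; 1; 2];
  [:: 0; 2; 1; 2; 0; 2; 0; 1; 2];
  [:: 0; 2; 1; 2; 0; 1; 0; 1; 2];
  [:: 0; 2; 0; 2; 1; 0; 2; 1; 2];
  [:: 1; 0; 1; 0; 2; 0; 2; 1; 2];
  [:: 0; 2; 0; 2; 1; 2; 0; 1; 2];
  [:: 2; 1; 2; 0; 1; 0; 2; 0; 2];
  [:: 2; 1; 2; 0; 1; 2; 0; 1; 2];
  [:: 0; 1; 0; 2; 1; 0; 2; 1; 2];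
  [:: 0; 1; 0; 2; 1; 0; 2; 0; 2];
  [:: 0; 1; 0; 2; 1; 2; 0; 1; 2];
  [:: 2; 0; 2; 0; 1; 0; 2; 1; 2];
  [:: 1; 2; 1; 2; 0; 2; 0; 1; 2];
  [:: 1; 2; 1; 2; 0; 1; 2; 0; 2];
  [:: 2; 0; 1; 0; 2; 1; 2; 0; 2];
  [:: 1; 2; 0; 2; 1; 2; 0; 1; 2];
  [:: 0; 1; 2; 0; 2; 1; 2; 1; 2];
  [:: 1; 2; 0; 1; 0; 2; 0; 1; 2];
  [:: 2; 0; 1; 2; 0; 2; 0; 1; 2];
  [:: 1; 2; 0; 1; 2; 0; 2; 1; 2];
  [:: 2; 0; 1; 2; 0; 1; 0; 1; 2];
  [:: 0; 2; 1; 0; 2; 1; 2; 0; 1; 2];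
  [:: 1; 0; 2; 1; 2; 0; 2; 0; 1; 2];
  [:: 1; 0; 2; 1; 2; 0; 1; 0; 1; 2];
  [:: 1; 0; 2; 0; 2; 1; 0; 2; 1; 2];
  [:: 1; 0; 1; 0; 2; 1; 0; 2; 0; 2];
  [:: 0; 2; 0; 2; 0; 1; 0; 2; 1; 2];
  [:: 2; 1; 2; 0; 2; 0; 2; 0; 1; 2];
  [:: 2; 1; 2; 0; 1; 0; 2; 0; 1; 2];
  [:: 2; 0; 2; 1; 0; 2; 1; 2; 1; 2];
  [:: 2; 0; 1; 0; 2; 1; 2; 0; 1; 2];
  [:: 1; 2; 0; 1; 0; 2; 1; 2; 0; 2];
  [:: 1; 2; 0; 1; 2; 0; 2; 0; 1; 2];
  [:: 1; 0; 2; 0; 2; 0; 1; 0; 2; 1; 2];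
  [:: 0; 2; 1; 2; 0; 1; 0; 2; 0; 1; 2];
  [:: 0; 2; 0; 2; 1; 0; 2; 1; 2; 1; 2];
  [:: 2; 1; 2; 0; 1; 2; 0; 2; 0; 1; 2];
  [:: 1; 2; 1; 2; 0; 2; 0; 2; 0; 1; 2]].

Definition typeIX (s : seq nat) : Prop := s \in type9_strings.

Definition bad (s : seq nat) : Prop :=
  normalized s /\ fully_ternary s /\ last 0 s = 2 /\
  (typeI s \/ typeII s \/ typeIII s \/ typeIV s \/ typeV s \/
   typeVI s \/ typeVII s \/ typeVIII s \/ typeIX s).

(* Main.v *)
Require Import Defs.
From mathcomp Require Import all_boot zify.
Set Implicit Arguments. Unset Strict Implicit. Unset Printing Implicit Defensive.

Notation nrm := (sorted (fun a b : nat => a != b)).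

Lemma normalize_id s : nrm s -> normalize s = s.
Proof.
elim: s => //= x s IH Hs.
have Hs' : nrm s by case: s Hs {IH} => //= y s /andP[].
rewrite IH //; case: s Hs {IH Hs'} => //= y s /andP[Hxy _].
by rewrite (negbTE Hxy).
Qed.

Lemma normalize_cons a v : exists r, normalize (a :: v) = a :: r.
Proof.
rewrite /=; case: (normalize v) => [|y t]; first by exists [::].
case: eqP => [->|_]; by eexists.
Qed.

Lemma normalize_dup a v : normalize (a :: a :: v) = normalize (a :: v).
Proof.
rewrite /=; case: (normalize v) => [|y t] /=; rewrite ?eqxx //.
by case: eqP => [->|_] /=; rewrite eqxx.
Qed.

Lemma normalize_cat_dup u a v :
  normalize (u ++ a :: a :: v) = normalize (u ++ a :: v).
Proof.
elim: u => [|c u IH]; first exact: normalize_dup.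
by rewrite cat_cons [normalize (c :: _)]/= IH.
Qed.

Lemma nrm_rev u : nrm (rev u) = nrm u.
Proof.
rewrite rev_sorted; case: u => //= x u.
by apply: eq_path => a b; rewrite eq_sym.
Qed.

Lemma nrm_tail a u : nrm (a :: u) -> nrm u.
Proof. by case: u => //= b u /andP[]. Qed.

Lemma nrm_move a x y : nrm (a :: x ++ a :: y) -> nrm (rev x ++ a :: y).
Proof.
rewrite -cat_cons !sorted_cat_cons => /andP[H1 H2].
rewrite H2 andbT -rev_cons nrm_rev.
by move: H1; rewrite rcons_cons /= rcons_path => /andP[].
Qed.

Lemma nrm_prefix u v : nrm (u ++ v) -> nrm u.
Proof. by move=> H; exact: (cat_sorted2 H).1. Qed.

Lemma nrm_suffix u v : nrm (u ++ v) -> nrm v.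
Proof. by move=> H; exact: (cat_sorted2 H).2. Qed.

Lemma flip_spec i s : nrm s -> 1 <= i <= size s ->
  nrm (flip i s) /\
  (size (flip i s) = size s \/
   (size (flip i s) = (size s).-1 /\
    exists a x y, s = a :: x ++ a :: y /\ flip i s = rev x ++ a :: y)).
Proof.
move=> Hn /andP[Hi1 Hi2].
case: s Hn Hi2 => [|a w] Hn Hi2; first by case: i Hi1 Hi2.
rewrite /flip; case: i Hi1 Hi2 => [|i] // _ Hi2.
rewrite [take _ _]/= [drop _ _]/= [size _]/=.
have Hw := cat_take_drop i w.
move: (take i w) (drop i w) Hw => x v Hw; subst w.
rewrite rev_cons cat_rcons.
clear Hi2; case: v Hn => [|b y] Hn.
  rewrite cats1 -rev_cons.
  have Hn2 : nrm (rev (a :: x)) by rewrite nrm_rev; move: Hn; rewrite cats0.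
  rewrite normalize_id //; split => //; left.
  by rewrite size_rev /= cats0.
have [Eb|Hab] := eqVneq b a.
  subst b; rewrite normalize_cat_dup.
  have Hm : nrm (rev x ++ a :: y) by apply: nrm_move.
  rewrite normalize_id //; split => //; right; split.
    by rewrite /= !size_cat size_rev.
  by exists a, x, y.
have Hm : nrm (rev x ++ a :: b :: y).
  rewrite sorted_cat_cons -rev_cons nrm_rev.
  move: Hn; rewrite -cat_cons sorted_cat_cons => /andP[H1 H2].
  move: H1; rewrite rcons_cons /= rcons_path => /andP[-> _].
  by rewrite H2 eq_sym Hab.
rewrite normalize_id //; split => //; left.
by rewrite size_cat size_rev /= size_cat /= addnS.
Qed.

Lemma flip_move a x y : nrm (a :: x ++ a :: y) ->
  flip (size x).+1 (a :: x ++ a :: y) = rev x ++ a :: y.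
Proof.
move=> Hn; rewrite /flip.
have -> : take (size x).+1 (a :: x ++ a :: y) = a :: x by rewrite /= take_size_cat.
have -> : drop (size x).+1 (a :: x ++ a :: y) = a :: y by rewrite /= drop_size_cat.
by rewrite rev_cons cat_rcons normalize_cat_dup normalize_id //; apply: nrm_move.
Qed.


Inductive GS : seq nat -> Prop :=
| GS0 : GS [:: 0; 1; 2]
| GSm a x y : GS (rev x ++ a :: y) -> GS (a :: x ++ a :: y).

Lemma GS_size s : GS s -> 3 <= size s.
Proof. elim=> // a x y _ IH; move: IH; rewrite /= !size_cat size_rev /=; lia. Qed.

Lemma LB idx s : nrm s -> apply_flips idx s = Some [:: 0; 1; 2] ->
  size s <= size idx + 3 /\ (size s = size idx + 3 -> GS s).
Proof.
elim: idx s => [|i idx IH] s Hn /=.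
  by case=> ->; split => // _; exact: GS0.
case: ifP => // Hi Ha.
have [Hn' Hsz] := flip_spec Hn Hi.
have [H1 H2] := IH _ Hn' Ha.
case: Hsz => [Hsz|[Hsz [a [x [y [Es Ef]]]]]].
  split; first by lia.
  by move=> E; lia.
have Hs : 0 < size s by rewrite Es.
split; first by lia.
move=> E; rewrite Es; apply: GSm; rewrite -Ef; apply: H2; lia.
Qed.

Lemma GS_sorts s : GS s -> nrm s -> sorts_in (size s - 3) s.
Proof.
elim=> [|a x y Ht IH Hn]; first by exists [::].
have Hm := nrm_move Hn.
have [idx [Hsz Ha]] := IH Hm.
have H3 := GS_size Ht.
exists ((size x).+1 :: idx); split.
  move: H3; rewrite /= Hsz !size_cat size_rev /=; lia.
rewrite /= flip_move // Ha.
have -> : size x < (size (x ++ a :: y)).+1 by rewrite size_cat /=; lia.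
done.
Qed.

Definition pt (p q x y : nat) : bool := ((x == p) && (y == q)) || ((x == q) && (y == p)).

Fixpoint ecnt (p q : nat) (s : seq nat) : nat :=
  match s with
  | x :: ((y :: _) as r) => pt p q x y + ecnt p q r
  | _ => 0
  end.

Lemma pt_sym p q x y : pt p q x y = pt p q y x.
Proof. by rewrite /pt orbC; congr (_ || _); rewrite andbC. Qed.

Lemma ecnt_cons2 p q x y r : ecnt p q [:: x, y & r] = pt p q x y + ecnt p q (y :: r).
Proof. by []. Qed.
Lemma ecnt_nil p q : ecnt p q [::] = 0. Proof. by []. Qed.
Lemma ecnt_one p q x : ecnt p q [:: x] = 0. Proof. by []. Qed.
Arguments ecnt p q s : simpl never.

Lemma ecnt_E1 p q u c v : ecnt p q (u ++ c :: v) = ecnt p q (rcons u c) + ecnt p q (c :: v).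
Proof.
elim: u => [|x u IH]; first by rewrite cat0s /= ecnt_one.
case: u IH => [|y u] IH.
  by rewrite cat_cons cat0s ecnt_cons2 [rcons _ _]/= ecnt_cons2 ecnt_one addn0.
rewrite !cat_cons ecnt_cons2 -cat_cons IH !rcons_cons ecnt_cons2 -rcons_cons.
by rewrite addnA.
Qed.

Lemma ecnt_E2 p q u c :
  ecnt p q (rcons u c) = ecnt p q u + (if u is [::] then 0 else pt p q (last 0 u) c).
Proof.
elim: u => [|x u IH]; first by rewrite /= ecnt_one.
case: u IH => [|y u] IH; first by rewrite [rcons _ _]/= ecnt_cons2 !ecnt_one /= addn0.
rewrite !rcons_cons ecnt_cons2 -rcons_cons IH ecnt_cons2 /=; lia.
Qed.

Lemma ecnt_rev p q u : ecnt p q (rev u) = ecnt p q u.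
Proof.
elim: u => [|c u IH] //.
case: u IH => [|d u] IH //.
rewrite rev_cons ecnt_E2 IH.
have -> : rev (d :: u) = rcons (rev u) d by rewrite rev_cons.
case E: (rcons (rev u) d) => [|e w]; first by case: (rev u) E.
rewrite -E last_rcons ecnt_cons2 pt_sym; lia.
Qed.

Lemma move_ecnt p q a x y :
  ecnt p q (a :: x ++ a :: y) = ecnt p q (rev x ++ a :: y) + pt p q (last a x) a.
Proof.
rewrite -cat_cons !ecnt_E1 -rev_cons ecnt_rev ecnt_E2 /=; lia.
Qed.

Lemma ecnt_nop p q s : p \notin s -> ecnt p q s = 0.
Proof.
elim: s => [|x s IH] //; rewrite in_cons negb_or => /andP[Hx Hs]; rewrite eq_sym in Hx.
case: s IH Hs => [|y s] IH Hs; first by rewrite ecnt_one.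
rewrite ecnt_cons2 IH // /pt (negbTE Hx) /=.
have Hy : y != p by apply: contraNneq Hs => ->; rewrite in_cons eqxx.
by rewrite (negbTE Hy) andbF.
Qed.

Lemma ecnt_noq p q s : q \notin s -> ecnt p q s = 0.
Proof.
elim: s => [|x s IH] //; rewrite in_cons negb_or => /andP[Hx Hs]; rewrite eq_sym in Hx.
case: s IH Hs => [|y s] IH Hs; first by rewrite ecnt_one.
rewrite ecnt_cons2 IH // /pt (negbTE Hx) /=.
have Hy : y != q by apply: contraNneq Hs => ->; rewrite in_cons eqxx.
by rewrite (negbTE Hy) andbF.
Qed.

Lemma ecnt_skip p q c u : c != p -> c != q -> ecnt p q (c :: u) = ecnt p q u.
Proof.
move=> Hp Hq; case: u => [|y u]; first by rewrite ecnt_one.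
by rewrite ecnt_cons2 /pt (negbTE Hp) (negbTE Hq).
Qed.

Lemma move_count c a x y :
  count_mem c (a :: x ++ a :: y) = count_mem c (rev x ++ a :: y) + nat_of_bool (a == c :> nat).
Proof. rewrite /= !count_cat count_rev /=; lia. Qed.

Lemma N1 s : GS s -> 0 < ecnt 1 2 s /\ 0 < ecnt 0 1 s.
Proof.
elim=> [|a x y _ [IH1 IH2]] //.
by rewrite !move_ecnt; lia.
Qed.

Definition Pinv s := (exists r, rev s = [:: 2, 1 & r]) /\ ecnt 1 2 s = 1 /\ 2 <= count_mem 2 s.
Definition Vinv s := (exists r, rev s = [:: 2, 1, 2, 0 & r]) /\ count_mem 2 s = 2 /\ ecnt 1 2 s = 2.

Lemma rev_s (a : nat) (X Y : seq nat) : rev (a :: rev X ++ a :: rev Y) = rcons Y a ++ rcons X a.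
Proof. by rewrite -cat_cons rev_cat !rev_cons !revK. Qed.

Lemma rev_t (a : nat) (X Y : seq nat) : rev (X ++ a :: rev Y) = rcons Y a ++ rev X.
Proof. by rewrite rev_cat rev_cons revK. Qed.

Lemma last_rev (a : nat) (X : seq nat) : last a (rev X) = head a X.
Proof. by case: X => [|e w] //=; rewrite rev_cons last_rcons. Qed.

Lemma N2 s : GS s -> Pinv s -> False.
Proof.
elim=> [|a x y Ht IH]; first by case=> _ [_].
have [N12 _] := N1 Ht.
move=> HP; apply: IH; move: HP N12.
have Hm := move_ecnt 1 2 a x y.
have Hcnt := move_count 2 a x y.
move: Hm Hcnt; rewrite -(revK y) -(revK x); move: (rev y) (rev x) => Y X.
rewrite revK last_rev => Hm Hcnt [[r Hr] [He Hc]] N12.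
have Hpt : pt 1 2 (head a X) a = false by move: Hm; rewrite He; case: pt => /=; lia.
have He' : ecnt 1 2 (X ++ a :: rev Y) = 1 by move: Hm; rewrite He Hpt; lia.
split; last split => //.
  move: Hr; rewrite rev_s rev_t.
  case: Y {Hm Hcnt Hc He N12 He'} => [|z1 [|z2 Y]] /=.
  - case: X Hpt => [|e X] /=.
  - by move=> _ H; congruence.
    by move=> Hpt [Ea Ee _]; subst; rewrite /pt in Hpt.
  - by move=> [-> -> _]; eexists.
  - by move=> [-> -> _]; eexists.
move: Hr Hcnt Hc; rewrite rev_s.
have [Ea|Ha] := eqVneq a 2; last by move=> _ ->; rewrite addn0.
clear Hm He N12 He'; rewrite Ea in Hpt *; rewrite /= !count_cat !count_rev /=.
case: Y => [|z1 Y] /=.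
  case: X Hpt => [|e X] /= Hpt [E]; first by [].
  by subst e; rewrite /pt in Hpt.
by case=> -> _; rewrite count_rev /=; lia.
Qed.

Lemma pt12_2 u v : pt 1 2 u v -> (u == 2) || (v == 2).
Proof. by rewrite /pt => /orP[] /andP[/eqP-> /eqP->]. Qed.

Lemma N3 s : GS s -> Vinv s -> False.
Proof.
elim=> [|a x y Ht IH]; first by case=> _ [].
have [N12 _] := N1 Ht.
have HN2 := N2 Ht.
move=> HV; apply: IH; move: HV N12 HN2.
have Hm := move_ecnt 1 2 a x y.
have Hcnt := move_count 2 a x y.
move: Hm Hcnt; rewrite -(revK y) -(revK x); move: (rev y) (rev x) => Y X.
rewrite revK last_rev => Hm Hcnt [[r Hr] [Hc He]] N12 HN2.
move: Hr; rewrite rev_s.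
have HcX : count_mem 2 (a :: rev X ++ a :: rev Y) = (a == 2) + count_mem 2 X + (a == 2) + count_mem 2 Y.
  by rewrite /= !count_cat !count_rev /= count_rev; lia.
have Hct : count_mem 2 (X ++ a :: rev Y) + (a == 2) = 2 by rewrite -Hcnt.
rewrite HcX in Hc.
destruct Y as [|z1 [|z2 [|z3 [|z4 Y]]]] => /=.
- case=> Ea; subst a; destruct X as [|e X] => //= [[Ee]].
  destruct X as [|f X] => //= [[Ef]].
  by subst; move: Hc => /=; lia.
- case=> Ez Ea; subst; destruct X as [|e X] => //= [[Ee _]]; subst e.
  exfalso; apply: HN2; split; first by rewrite rev_t /=; eexists.
  split; last by move: Hct => /=; lia.
  by move: Hm; rewrite He /=; lia.
- by case=> Ez1 Ez2 Ea; subst; move: Hc => /=; lia.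
- case=> Ez1 Ez2 Ez3 Ea; subst; split; first by rewrite rev_t /=; eexists.
  split; first by move: Hct => /=; lia.
  have Hp : pt 1 2 (head 0 X) 0 = false.
    apply/negP => /pt12_2 /orP[] /eqP E //.
    by destruct X as [|e X] => //=; simpl in E; subst e; move: Hc => /=; lia.
  by move: Hm; rewrite He Hp /=; lia.
- case=> Ez1 Ez2 Ez3 Ez4 Er; subst.
  have Ha : a != 2 by apply/negP => /eqP Ea; subst; move: Hc => /=; lia.
  have HX : count_mem 2 X = 0 by move: Hc; rewrite (negbTE Ha) /=; lia.
  split; first by rewrite rev_t /=; eexists.
  split; first by move: Hct; rewrite (negbTE Ha) /=; lia.
  have Hp : pt 1 2 (head a X) a = false.
    apply/negP => /pt12_2 /orP[] /eqP E; last by rewrite E in Ha.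
    destruct X as [|e X]; first by simpl in E; rewrite E in Ha.
    by simpl in E; subst e; move: HX => /=; lia.
  by move: Hm; rewrite He Hp /=; lia.
Qed.


Lemma inv_eps u : matches REps u -> u = [::].
Proof. by move=> H; inversion H. Qed.

Lemma inv_sym A u : matches (RSym A) u -> exists a, a \in A /\ u = [:: a].
Proof. by move=> H; inversion H; subst; exists a. Qed.

Lemma inv_cat r1 r2 u : matches (RCat r1 r2) u ->
  exists u1 u2, matches r1 u1 /\ matches r2 u2 /\ u = u1 ++ u2.
Proof. by move=> H; inversion H; subst; exists u0, v. Qed.

Lemma star_ind r (P : seq nat -> Prop) :
  P [::] -> (forall u v, matches r u -> P v -> P (u ++ v)) ->
  forall u, matches (RStar r) u -> P u.
Proof.
move=> H0 HS u H.
remember (RStar r) as R eqn:ER.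
elim: H ER => //.
- by move=> r0 u0 v Hu _ Hv IH [E]; subst r0; apply: HS => //; apply: IH.
Qed.

Lemma inv_word w u : matches (RWord w) u -> u = w.
Proof.
elim: w u => [|a w IH] u /=; first exact: inv_eps.
move/inv_cat=> [u1 [u2 [/inv_sym [b [Hb ->]] [/IH -> ->]]]].
by move: Hb; rewrite inE => /eqP->.
Qed.

Definition rep (w : seq nat) k := flatten (nseq k w).

Lemma rep_S w k : rep w k.+1 = w ++ rep w k.
Proof. by []. Qed.

Lemma mem_rep w k c : c \in rep w k -> c \in w.
Proof.
elim: k => [|k IH] //=; rewrite /rep /= mem_cat => /orP[] //.
Qed.

Lemma inv_star_word w u : matches (RStar (RWord w)) u -> exists k, u = rep w k.
Proof.
apply: (@star_ind _ (fun u => exists k, u = rep w k)); first by exists 0.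
by move=> u1 v /inv_word -> [k ->]; exists k.+1.
Qed.

Lemma inv_plus_word w u : matches (RPlus (RWord w)) u -> exists k, u = rep w k.+1.
Proof.
by move/inv_cat=> [u1 [u2 [/inv_word -> [/inv_star_word [k ->] ->]]]]; exists k.
Qed.

Lemma GS_inv s : GS s -> s = [:: 0; 1; 2] \/
  exists a x y, s = a :: x ++ a :: y /\ GS (rev x ++ a :: y).
Proof. case=> [|a x y H]; [by left | by right; exists a, x, y]. Qed.

Lemma decomp_uniq (c : nat) (x y x' y' : seq nat) : x ++ c :: y = x' ++ c :: y' ->
  c \notin x' -> c \notin y' -> x = x' /\ y = y'.
Proof.
elim: x x' => [|d x IH] [|d' x'] //=.
- by case=> ->.
- by case=> -> _; rewrite in_cons eqxx.
- by case=> -> <- _; rewrite mem_cat in_cons eqxx orbT.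
- case=> -> E; rewrite in_cons negb_or => /andP[_ H1] H2.
  by have [-> ->] := IH _ E H1 H2.
Qed.


Ltac dmatch := repeat match goal with
 | H : matches (RWord _) _ |- _ => apply inv_word in H; subst
 | H : matches (RPlus (RWord _)) _ |- _ => let k := fresh "k" in
      destruct (inv_plus_word H) as [k ?]; clear H; subst
 | H : matches (RStar (RWord _)) _ |- _ => let k := fresh "k" in
      destruct (inv_star_word H) as [k ?]; clear H; subst
 | H : matches (RGe2 _) _ |- _ => unfold RGe2 in H
 | H : matches (RCat _ _) _ |- _ =>
      let u1 := fresh "u" in let u2 := fresh "u" in let H1 := fresh "H" in
      let H2 := fresh "H" in
      destruct (inv_cat H) as [u1 [u2 [H1 [H2 ?]]]]; clear H; subst
 end.

Lemma mem_rep2 (p q c : nat) k : c \in rep [:: p; q] k -> (c == p) || (c == q).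
Proof. by move/mem_rep; rewrite !inE. Qed.

Lemma notin_rep (p q c : nat) k : c != p -> c != q -> c \notin rep [:: p; q] k.
Proof.
move=> H1 H2; apply/negP => /mem_rep2 /orP[] /eqP E; subst; by rewrite eqxx in H1 H2.
Qed.

Lemma ecnt_sep p q c x y : ecnt p q (rev x ++ c :: y) = ecnt p q (c :: x) + ecnt p q (c :: y).
Proof. by rewrite ecnt_E1 -rev_cons ecnt_rev. Qed.

Lemma GS_first a x y s : GS s -> s = a :: x ++ a :: y -> a \notin x -> a \notin y ->
  GS (rev x ++ a :: y).
Proof.
move=> /GS_inv [E0|[b [x' [y' [Es Ht]]]]] E Hx Hy.
  rewrite E0 in E; case: E => Ea E'; subst a.
  by have : 0 \in [:: 1; 2] by rewrite E' mem_cat in_cons eqxx orbT.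
rewrite E in Es; case: Es => Eb E'; subst b.
have [Ex Ey] := decomp_uniq (esym E') Hx Hy.
by subst.
Qed.

Lemma nGS_I s : typeI s -> GS s -> False.
Proof.
rewrite /typeI => H; dmatch.
move/GS_inv => [|[a [x [y [E _]]]]].
  by rewrite /rep.
move: E => /=; case=> Ea; subst a => E.
have : 0 \in [:: 1, 2, 1, 2 & rep [:: 1; 2] k] by rewrite E mem_cat in_cons eqxx orbT.
by rewrite !inE /=; apply/negP; exact: notin_rep.
Qed.

Lemma inv_pair A d u : matches (RSym A ;; RWord [:: d]) u -> exists c, u = [:: c; d].
Proof. by move/inv_cat=> [u1 [u2 [/inv_sym [c [_ ->]] [/inv_word -> ->]]]]; exists c. Qed.

Lemma inv_pair' A d u : matches (RWord [:: d] ;; RSym A) u -> exists c, u = [:: d; c].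
Proof. by move/inv_cat=> [u1 [u2 [/inv_word -> [/inv_sym [c [_ ->]] ->]]]]; exists c. Qed.

Lemma II_e01 s : typeII s -> ecnt 0 1 s = 0.
Proof.
have Hst : forall u, matches (RStar (RSym [:: 0; 1] ;; RWord [:: 2])) u -> ecnt 0 1 u = 0.
  apply: (@star_ind _ (fun u => ecnt 0 1 u = 0)) => // u v /inv_pair [c ->] Hv.
  by rewrite /= ecnt_cons2 ecnt_skip // Hv /pt /= !andbF.
have Hp : forall u, matches (RPlus (RSym [:: 0; 1] ;; RWord [:: 2])) u -> ecnt 0 1 u = 0.
  move=> u /inv_cat [u1 [u2 [/inv_pair [c ->] [/Hst Hv ->]]]].
  by rewrite /= ecnt_cons2 ecnt_skip // Hv /pt /= !andbF.
case; first exact: Hp.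
by move/inv_cat=> [u1 [u2 [/inv_word -> [/Hp Hv ->]]]]; rewrite /= ecnt_skip.
Qed.

Lemma III_e12 s : typeIII s -> ecnt 1 2 s = 0.
Proof.
have Hst : forall u, matches (RStar (RSym [:: 1; 2] ;; RWord [:: 0])) u -> ecnt 1 2 (u ++ [:: 2]) = 0.
  apply: (@star_ind _ (fun u => ecnt 1 2 (u ++ [:: 2]) = 0)) => // u v /inv_pair [c ->] Hv.
  by rewrite /= ecnt_cons2 ecnt_skip // Hv /pt /= !andbF.
have Hp : forall u, matches (RPlus (RSym [:: 1; 2] ;; RWord [:: 0])) u -> ecnt 1 2 (u ++ [:: 2]) = 0.
  move=> u /inv_cat [u1 [u2 [/inv_pair [c ->] [/Hst Hv ->]]]].
  by rewrite /= ecnt_cons2 ecnt_skip // Hv /pt /= !andbF.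
case.
  by move/inv_cat=> [u1 [u2 [/Hp Hv [/inv_word -> ->]]]].
move/inv_cat=> [u1 [u2 [/inv_cat [u3 [u4 [/inv_word -> [/Hp Hv ->]]]] [/inv_word -> ->]]]].
by rewrite -catA /= ecnt_skip.
Qed.

Lemma IV_P s : typeIV s -> Pinv s.
Proof.
case=> [[H|H] Hc].
- have Hst : forall u, matches (RStar (RSym [:: 1; 2] ;; RWord [:: 0])) u -> ecnt 1 2 (u ++ [:: 1; 2]) = 1.
    apply: (@star_ind _ (fun u => ecnt 1 2 (u ++ [:: 1; 2]) = 1)) => // u v /inv_pair [c ->] Hv.
    by rewrite /= ecnt_cons2 ecnt_skip // Hv /pt /= !andbF.
  move: H Hc => /inv_cat [u1 [u2 [/inv_cat [u3 [u4 [/inv_pair [c ->] [/Hst Hv ->]]]] [/inv_word -> ->]]]] Hc.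
  split; first by rewrite rev_cat /=; eexists.
  split => //.
  by rewrite -catA /= ecnt_cons2 ecnt_skip // Hv /pt /= !andbF.
- have Hst : forall u, matches (RStar (RWord [:: 0] ;; RSym [:: 1; 2])) u ->
      ecnt 1 2 (u ++ [:: 0; 1; 2]) = 1 /\ head 0 u = 0.
    apply: (@star_ind _ (fun u => ecnt 1 2 (u ++ [:: 0; 1; 2]) = 1 /\ head 0 u = 0)) => // u v /inv_pair' [c ->] [Hv Hh].
    split => //; rewrite /= ecnt_skip //.
    case: v Hv Hh => [|d v] Hv Hh /=; last (simpl in Hh; subst d).
      by rewrite ecnt_cons2 Hv /pt /= !andbF.
    by rewrite ecnt_cons2 -cat_cons Hv /pt /= !andbF.
  move: H Hc => /inv_cat [u1 [u2 [/inv_cat [u3 [u4 [/inv_pair' [c ->] [/Hst [Hv Hh] ->]]]] [/inv_word -> ->]]]] Hc.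
  split; first by rewrite rev_cat /=; eexists.
  split => //.
  rewrite -catA /= ecnt_skip //.
  clear Hc; case: u4 Hv Hh => [|d v] Hv Hh /=; last (simpl in Hh; subst d).
    by rewrite ecnt_cons2 Hv /pt /= !andbF.
  by rewrite ecnt_cons2 -cat_cons Hv /pt /= !andbF.
Qed.

Lemma rep_Sr w k : rep w k.+1 = rep w k ++ w.
Proof. by elim: k => [|k IH]; rewrite /rep /= ?cats0 // -catA -[flatten _ ++ w]IH. Qed.

Lemma V_gen u : 2 \notin u -> Vinv (u ++ [:: 0; 2; 1; 2]).
Proof.
move=> Hu; split; first by rewrite rev_cat /=; eexists.
split; first by rewrite count_cat (count_memPn Hu).
rewrite ecnt_E1 ecnt_noq; first by [].
by rewrite -cats1 mem_cat negb_or Hu.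
Qed.

Lemma V_V s : typeV s -> Vinv s.
Proof.
case=> H; dmatch.
  by apply: V_gen; apply: notin_rep.

have -> : rep [:: 1; 0] k.+1 ++ [:: 2; 1; 2] = (rep [:: 1; 0] k ++ [:: 1]) ++ [:: 0; 2; 1; 2].
  by rewrite rep_Sr -!catA.
apply: V_gen; rewrite mem_cat negb_or notin_rep //.
Qed.

Lemma ecnt_head0 p q c y : pt p q c (head c y) = false -> (p \notin y \/ q \notin y) ->
  ecnt p q (c :: y) = 0.
Proof.
case: y => [|d w] /= Hpt Hn; first by rewrite ecnt_one.
rewrite ecnt_cons2 Hpt /=.
by case: Hn => H; [exact: ecnt_nop | exact: ecnt_noq].
Qed.

Lemma nGS_VI s : typeVI s -> GS s -> False.
Proof.
case=> H; dmatch; move=> HG.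
- have Ht : GS (rev (rep [:: 2; 0] k0.+1) ++ 1 :: (rep [:: 2; 0] k ++ [:: 2])).
    apply: (GS_first HG); [by rewrite -!catA | exact: notin_rep | by rewrite mem_cat negb_or notin_rep].
  have [_ N] := N1 Ht.
  move: N; rewrite ecnt_sep !ecnt_head0 //.
  + by destruct k.
  + by right; rewrite mem_cat negb_or notin_rep.
  + by right; apply: notin_rep.
- have Ht : GS (rev (rep [:: 2; 1] k0.+1) ++ 0 :: (rep [:: 2; 1] k ++ [:: 2])).
    apply: (GS_first HG); [by rewrite -!catA | exact: notin_rep | by rewrite mem_cat negb_or notin_rep].
  have [_ N] := N1 Ht.
  move: N; rewrite ecnt_sep !ecnt_head0 //.
  + by destruct k.
  + by left; rewrite mem_cat negb_or notin_rep.
  + by left; apply: notin_rep.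
Qed.

Lemma nGS_VII s : typeVII s -> GS s -> False.
Proof.
rewrite /typeVII => H; dmatch; move=> HG.
have Ht : GS (rev (rep [:: 0; 2] k0.+1) ++ 1 :: rep [:: 0; 2] k.+1).
  apply: (GS_first HG); [by rewrite -!catA | exact: notin_rep | exact: notin_rep].
have [N _] := N1 Ht.
move: N; rewrite ecnt_sep !ecnt_head0 //.
+ by left; apply: notin_rep.
+ by left; apply: notin_rep.
Qed.

Lemma nGS_VIII s : typeVIII s -> GS s -> False.
Proof.
rewrite /typeVIII => H; dmatch; move=> HG.
have Ht : GS (rev (rep [:: 0; 2] k.+1) ++ 1 :: [:: 2]).
  apply: (GS_first HG); [by rewrite -!catA | exact: notin_rep | by []].
apply: (N2 Ht).
split; first by rewrite rev_cat revK /=; eexists.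
split.
  rewrite ecnt_sep ecnt_head0 //; first by left; apply: notin_rep.
rewrite count_cat count_rev /=; lia.
Qed.


Fixpoint gsb (f : nat) (s : seq nat) : bool :=
  if s == [:: 0; 1; 2] then true else
  (if f is f'.+1 then
    (if s is a :: w then
      has (fun j => if nth 0 w j == a then gsb f' (rev (take j w) ++ a :: drop j.+1 w) else false)
          (iota 0 (size w))
     else false)
  else false).

Lemma drop_size_cat1 (x y : seq nat) a : drop (size x).+1 (x ++ a :: y) = y.
Proof. by elim: x => [|b x IH] //=; rewrite drop0. Qed.

Lemma gsb_sound s : GS s -> gsb (size s) s.
Proof.
elim=> [|a x y _ IH] //.
have -> : size (a :: x ++ a :: y) = (size (rev x ++ a :: y)).+1.
  by rewrite /= !size_cat size_rev.
rewrite /=; case: ifP => // _; apply/hasP; exists (size x).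
  by rewrite mem_iota size_cat /=; lia.
by rewrite nth_cat ltnn subnn /= eqxx take_size_cat // drop_size_cat1.
Qed.

Lemma IX_check : all (fun s => ~~ gsb (size s) s) type9_strings.
Proof. by vm_compute. Qed.

Lemma nGS_IX s : typeIX s -> GS s -> False.
Proof.
move=> H /gsb_sound; move: (allP IX_check s H) => /negP; exact.
Qed.

Lemma nGS_bad s : bad s -> GS s -> False.
Proof.
case=> _ [_ [_ H]] HG.
case: H => [H|[H|[H|[H|[H|[H|[H|[H|H]]]]]]]].
- exact: nGS_I H HG.
- by have [_] := N1 HG; rewrite II_e01.
- by have [] := N1 HG; rewrite III_e12.
- exact: N2 HG (IV_P H).
- exact: N3 HG (V_V H).
- exact: nGS_VI H HG.
- exact: nGS_VII H HG.
- exact: nGS_VIII H HG.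
- exact: nGS_IX H HG.
Qed.

Fixpoint lhas (f : nat -> bool) (l : seq nat) : bool :=
  if l is x :: l' then (if f x then true else lhas f l') else false.

Lemma lhasP f l : lhas f l -> exists2 x, x \in l & f x.
Proof.
elim: l => [|x l IH] //=; case: ifP => Hf.
  by move=> _; exists x; rewrite ?inE ?eqxx.
by move/IH=> [y Hy Hf']; exists y; rewrite // inE Hy orbT.
Qed.

Fixpoint sortb (k : nat) (s : seq nat) : bool :=
  if k is k'.+1 then lhas (fun i => sortb k' (flip i s)) (iota 1 (size s))
  else s == [:: 0; 1; 2].

Lemma sorts_prepend i k s : 1 <= i <= size s -> sorts_in k (flip i s) -> sorts_in k.+1 s.
Proof.
move=> Hi [idx [Hsz Ha]]; exists (i :: idx); split; first by rewrite /= Hsz.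
by rewrite /= Hi.
Qed.

Lemma sortb_sound k s : sortb k s -> sorts_in k s.
Proof.
elim: k s => [|k IH] s /=; first by move/eqP->; exists [::].
move/lhasP=> [i Hi /IH Hs]; apply: sorts_prepend Hs.
by move: Hi; rewrite mem_iota; lia.
Qed.

Fixpoint words (n : nat) : seq (seq nat) :=
  if n is n'.+1 then
    [seq 0 :: w | w <- words n'] ++ [seq 1 :: w | w <- words n'] ++ [seq 2 :: w | w <- words n']
  else [:: [::]].

Lemma mem_words s : all (fun c => c < 3) s -> s \in words (size s).
Proof.
elim: s => [|c s IH] //= /andP[Hc Hs].
have Hw := IH Hs.
rewrite !mem_cat.
case: c Hc => [|[|[|c]]] // _.
- by rewrite (map_f (fun w => 0 :: w) Hw).
- by rewrite (map_f (fun w => 1 :: w) Hw) orbT.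
- by rewrite (map_f (fun w => 2 :: w) Hw) !orbT.
Qed.

Definition condb (s : seq nat) : bool :=
  [&& sorted (fun a b : nat => a != b) s, 0 \in s, 1 \in s, 2 \in s, last 0 s == 2 &
   s != [:: 0; 2; 1; 2]].

Lemma small_check n : n <= 6 ->
  all (fun s => if condb s then sortb (size s - 2) s else true) (words n).
Proof.
by case: n => [|[|[|[|[|[|[|n]]]]]]] //; vm_compute.
Qed.


Arguments rep w k : simpl never.

Lemma size_rep w k : size (rep w k) = size w * k.
Proof. elim: k => [|k IH]; first by rewrite muln0. by rewrite rep_S size_cat IH mulnS. Qed.

Lemma path_rep (p q c : nat) m : p != q -> c != p ->
  path (fun a b : nat => a != b) c (rep [:: p; q] m).
Proof.
move=> Hpq; elim: m c => [|m IH] c Hc //=.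
by rewrite Hc Hpq /=; apply: IH; rewrite eq_sym.
Qed.

Lemma GS_CD m : GS [:: 0, 1, 2 & rep [:: 0; 2] m] /\ GS [:: 2, 1 & rep [:: 0; 2] m.+1].
Proof.
elim: m => [|m [IH1 IH2]].
  split; first exact: GS0.
  exact: (@GSm 2 [:: 1; 0] [::] GS0).
have H1 : GS [:: 0, 1, 2 & rep [:: 0; 2] m.+1] := @GSm 0 [:: 1; 2] _ IH2.
split => //.
exact: (@GSm 2 [:: 1; 0] _ H1).
Qed.

Lemma GS_B2 : GS [:: 2; 0; 1; 2; 1; 2].
Proof.
apply: (@GSm 2 [:: 0; 1; 2; 1] [::]).
apply: (@GSm 1 [:: 2] [:: 0; 2]).
apply: (@GSm 2 [:: 1; 0] [::]).
exact: GS0.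
Qed.

Lemma GS_AB m : GS [:: 2, 0 & rep [:: 1; 2] m.+2] /\ GS [:: 1, 0, 2 & rep [:: 1; 2] m.+2].
Proof.
elim: m => [|m [IH1 IH2]].
  split; first exact: GS_B2.
  exact: (@GSm 1 [:: 0; 2] [:: 2; 1; 2] GS_B2).
have H1 : GS [:: 2, 0 & rep [:: 1; 2] m.+3] := @GSm 2 [:: 0; 1] _ IH2.
split => //.
exact: (@GSm 1 [:: 0; 2] _ H1).
Qed.

Lemma alt_shape (p q : nat) w : p != q -> nrm w -> all (fun c => (c == p) || (c == q)) w ->
  last p w = q -> exists k, w = rep [:: p; q] k \/ w = q :: rep [:: p; q] k.
Proof.
move=> Hpq; elim: w => [|c w IH] /=; first by move=> _ _ E; rewrite E eqxx in Hpq.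
case: w IH => [|d w] IH.
  by move=> _ _ /= ->; exists 0; right.
move=> Hn /andP[Hc Ha] Hl.
have [k [E|E]] := IH (nrm_tail Hn) Ha Hl.
- case: k E => [|k] E; first by [].
  rewrite E rep_S in Hn *.
  move: Hn Hc => /= /andP[Hcp _] /orP[] /eqP Ec; first by rewrite Ec eqxx in Hcp.
  by exists k.+1; right; rewrite Ec.
- rewrite E in Hn *; move: Hn Hc => /= /andP[Hcq _] /orP[] /eqP Ec; last by rewrite Ec eqxx in Hcq.
  by exists k.+1; left; rewrite Ec rep_S.
Qed.

Lemma flip2 (a b : nat) r : nrm [:: b, a & r] -> flip 2 [:: a, b & r] = [:: b, a & r].
Proof. by move=> H; rewrite /flip /= take0 drop0 normalize_id. Qed.

Lemma sorts_via_GS2 a b r : nrm [:: b, a & r] -> GS [:: b, a & r] ->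
  sorts_in (size r) [:: a, b & r].
Proof.
move=> Hn HG.
have H := GS_sorts HG Hn.
have H3 := GS_size HG.
have -> : size r = (size [:: b, a & r] - 3).+1 by move: H3 => /=; lia.
apply: (sorts_prepend (i := 2)); first by [].
by rewrite flip2.
Qed.

Lemma size_cons' (x : nat) s : size (x :: s) = (size s).+1.
Proof. by []. Qed.

Lemma size_rep2 (p q : nat) k : size (rep [:: p; q] k) = 2 * k.
Proof. by rewrite size_rep. Qed.

Lemma nrm3 (a b c : nat) r : a != b -> b != c ->
  path (fun a b : nat => a != b) c r -> nrm [:: a, b, c & r].
Proof. by move=> H1 H2 H3; rewrite /= H1 H2. Qed.

Lemma nrm2 (a b : nat) r : a != b ->
  path (fun a b : nat => a != b) b r -> nrm [:: a, b & r].
Proof. by move=> H1 H3; rewrite /= H1. Qed.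

Lemma small_U s : nrm s -> fully_ternary s -> last 0 s = 2 -> s <> [:: 0; 2; 1; 2] ->
  size s <= 6 -> sorts_in (size s - 2) s.
Proof.
move=> Hn Hft Hl Hne Hs6.
have Hall : all (fun c => c < 3) s by apply/allP => c Hc; rewrite -Hft.
have := allP (small_check Hs6) s (mem_words Hall).
have -> : condb s.
  rewrite /condb Hn !Hft Hl eqxx /=; apply/eqP => E; exact: Hne.
exact: sortb_sound.
Qed.

Lemma last_nonempty (p q : nat) w : w != [::] -> last p w = last q w.
Proof. by case: w. Qed.

Lemma U_big_unique a w : nrm (a :: w) -> fully_ternary (a :: w) -> last 0 (a :: w) = 2 ->
  a \notin w -> 7 <= size (a :: w) -> sorts_in (size (a :: w) - 2) (a :: w).
Proof.
move=> Hn Hft Hl Haw Hsz.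
have Hw0 : w != [::] by case: w Hsz {Hn Hft Hl Haw}.
have Hl' : last a w = 2 by [].
have H2w : 2 \in w by rewrite -Hl'; case: w Hw0 {Hn Hft Hl Haw Hsz Hl'} => //= c w _; exact: mem_last.
have Ha2 : a != 2 by apply: contraNneq Haw => ->.
have Ha3 : a < 3 by rewrite -Hft mem_head.
have Hal : forall p, p != a -> p != 2 -> p < 3 ->
    exists k, w = rep [:: p; 2] k \/ w = 2 :: rep [:: p; 2] k.
  move=> p Hpa Hp2 Hp3; apply: alt_shape => //.
  - exact: nrm_tail Hn.
  - apply/allP => c Hc.
    have : c < 3 by rewrite -Hft inE Hc orbT.
    have Hca : c != a by apply: contraNneq Haw => <-.
    move=> Hc3; lia.
  - by rewrite (last_nonempty p a Hw0).
case: a Ha2 Ha3 Hn Hft Hl Haw Hsz Hl' Hal => [|[|[|a]]] // _ _ Hn Hft Hl Haw Hsz Hl' Hal.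
- have [k [E|E]] := Hal 1 isT isT isT; subst w; clear Hal Hl' Hl Haw Hft H2w Hw0 Hn.
  + have Hk : 3 <= k by move: Hsz; rewrite size_cons' size_rep2; lia.
    case: k Hk Hsz => [|[|[|k]]] // _ Hsz.
    have -> : 0 :: rep [:: 1; 2] k.+3 = [:: 0, 1 & 2 :: rep [:: 1; 2] k.+2] by rewrite rep_S.
    have -> : size [:: 0, 1 & 2 :: rep [:: 1; 2] k.+2] - 2 = size (2 :: rep [:: 1; 2] k.+2).
      by rewrite !size_cons'; lia.
    apply: sorts_via_GS2; last exact: (GS_AB k).2.
    by apply: nrm3 => //; apply: path_rep.
  + have Hk : 3 <= k by move: Hsz; rewrite !size_cons' size_rep2; lia.
    case: k Hk Hsz => [|[|[|k]]] // _ Hsz.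
    have -> : size [:: 0, 2 & rep [:: 1; 2] k.+3] - 2 = size (rep [:: 1; 2] k.+3).
      by rewrite !size_cons'; lia.
    apply: sorts_via_GS2; last exact: (GS_AB k.+1).1.
    by apply: nrm2 => //; apply: path_rep.
- have [k [E|E]] := Hal 0 isT isT isT; subst w; clear Hal Hl' Hl Haw Hft H2w Hw0 Hn.
  + have Hk : 1 <= k by move: Hsz; rewrite size_cons' size_rep2; lia.
    case: k Hk Hsz => [|k] // _ Hsz.
    have -> : 1 :: rep [:: 0; 2] k.+1 = [:: 1, 0 & 2 :: rep [:: 0; 2] k] by rewrite rep_S.
    have -> : size [:: 1, 0 & 2 :: rep [:: 0; 2] k] - 2 = size (2 :: rep [:: 0; 2] k).
      by rewrite !size_cons'; lia.
    apply: sorts_via_GS2; last exact: (GS_CD k).1.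
    by apply: nrm3 => //; apply: path_rep.
  + have Hk : 1 <= k by move: Hsz; rewrite !size_cons' size_rep2; lia.
    case: k Hk Hsz => [|k] // _ Hsz.
    have -> : size [:: 1, 2 & rep [:: 0; 2] k.+1] - 2 = size (rep [:: 0; 2] k.+1).
      by rewrite !size_cons'; lia.
    apply: sorts_via_GS2; last exact: (GS_CD k).2.
    by apply: nrm2 => //; apply: path_rep.
Qed.


Lemma U s : nrm s -> fully_ternary s -> last 0 s = 2 -> s <> [:: 0; 2; 1; 2] ->
  sorts_in (size s - 2) s.
Proof.
have [m Hm] : exists m, size s <= m by exists (size s).
elim: m s Hm => [|m IH] s Hm Hn Hft Hl Hne.
  by apply: small_U => //; lia.
case: (leqP (size s) 6) => Hs6; first exact: small_U.
case: s Hm Hn Hft Hl Hne Hs6 => [|a w] // Hm Hn Hft Hl Hne Hs6.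
case Haw: (a \in w); last by apply: U_big_unique => //; rewrite Haw.
set i := index a w.
have Hi : i < size w by rewrite index_mem.
set x := take i w; set y := drop i.+1 w.
have Ew : w = x ++ a :: y.
  by rewrite -{1}(cat_take_drop i w) (drop_nth a Hi) nth_index.
rewrite Ew in Hn Hft Hl Hm Hs6 *.
have Hnt := nrm_move Hn.
have Hsz : size (rev x ++ a :: y) = (size (a :: x ++ a :: y)).-1.
  by rewrite /= !size_cat size_rev.
have Ht : sorts_in (size (rev x ++ a :: y) - 2) (rev x ++ a :: y).
  apply: IH => //.
  - by rewrite Hsz; lia.
  - move=> z; rewrite -Hft mem_cat mem_rev !in_cons mem_cat in_cons.
    by case: (z == a); case: (z \in x); case: (z \in y).
  - by move: Hl; rewrite /= !last_cat /=.
  - by move=> E; move: Hsz Hs6; rewrite E /=; lia.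
have := sorts_prepend (i := (size x).+1) _ (s := a :: x ++ a :: y); rewrite flip_move //.
have -> : size (a :: x ++ a :: y) - 2 = (size (rev x ++ a :: y) - 2).+1.
  by rewrite Hsz; lia.
apply => //.
by rewrite /= size_cat /=; lia.
Qed.

Theorem lemma4p5 (s : seq nat) :
  bad s -> s <> [:: 0; 2; 1; 2] ->
  sorting_distance_is s (size s - 2).
Proof.
move=> Hbad Hne.
have [Hn [Hft [Hl _]]] := Hbad.
split; first exact: U.
move=> k [idx [Hsz Ha]].
have [H1 H2] := LB Hn Ha.
rewrite Hsz in H1 H2.
case: (ltngtP (size s) (k + 3)) => Hc; try lia.
by have := nGS_bad Hbad (H2 Hc).
Qed.
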